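(* Let $q$ be a prime power and $m\ge2$ an integer, and set $n'=\lceil\frac{q^{m-1}}{q-1}\rceil$. Let $\mathbf{C}'$ be the code obtained from the $q$-ary simplex $[\frac{q^m-1}{q-1},m,q^{m-1}]_q$ code by the extension construction. Then $\mathbf{C}'$ is a minimal linear $[\frac{q^m-1}{q-1}+n',\ m,\ q^{m-1}]_q$ code violating the Ashikhmin–Barg condition, with weight distribution: one codeword of weight $0$, $q^{m-1}-1$ codewords of weight $q^{m-1}$, and $(q-1)q^{m-1}$ codewords of weight $q^{m-1}+n'$.
   Context: The $q$-ary simplex code of dimension $m$ is generated by an $m\times\frac{q^m-1}{q-1}$ matrix whose columns are representatives of all one-dimensional subspaces of $\mathbf{F}_q^m$; all its nonzero codewords have weight $q^{m-1}$. Extension construction for a $q$-ary $[N,K]$ code $\mathbf{D}$ with $K\ge2$, minimum nonzero weight $w_{min}$, maximum weight $w_{max}$ and $n'=\lceil\frac{qw_{min}}{q-1}\rceil-w_{max}\ge1$: choose a basis $\mathbf{r}_1,\dots,\mathbf{r}_K$ with $wt(\mathbf{r}_1)=w_{max}$, $wt(\mathbf{r}_2)=w_{min}$ and $\mathbf{a}\in(\mathbf{F}_q^* )^{n'}$; the extended code is generated by $(\mathbf{a},\mathbf{r}_1),(\mathbf{0},\mathbf{r}_2),\dots,(\mathbf{0},\mathbf{r}_K)$ in $\mathbf{F}_q^{n'+N}$. Minimal code: any nonzero codewords $\mathbf{c},\mathbf{c}'$ with $supp(\mathbf{c}')\subseteq supp(\mathbf{c})$ satisfy $\mathbf{c}'=\lambda\mathbf{c}$,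 $\lambda\in\mathbf{F}_q^*$. Ashikhmin–Barg condition: $w_{min}/w_{max}>(q-1)/q$. *)

(* Defs.v *)
From HB Require Import structures.
From mathcomp Require Import all_boot all_order all_algebra all_field.
Set Implicit Arguments. Unset Strict Implicit. Unset Printing Implicit Defensive.
Import GRing.Theory.
Local Open Scope ring_scope.

Section Codes.
Variable F : finFieldType.

Definition supp n (c : 'rV[F]_n) : {set 'I_n} := [set i | c 0 i != 0].
Definition wt n (c : 'rV[F]_n) : nat := #|supp c|.

Definition codewords k n (G : 'M[F]_(k, n)) : {set 'rV[F]_n} :=
  [set c : 'rV[F]_n | (c <= G)%MS].

Definition wmax k n (G : 'M[F]_(k, n)) : nat := \max_(c in codewords G) wt c.
Definition wmin k n (G : 'M[F]_(k, n)) : nat :=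
  \big[minn/wmax G]_(c in codewords G | c != 0) wt c.

Definition wdist k n (G : 'M[F]_(k, n)) (w : nat) : nat :=
  #|[set c in codewords G | wt c == w]|.

Definition minimal_code k n (G : 'M[F]_(k, n)) : Prop :=
  forall c c', c \in codewords G -> c' \in codewords G -> c != 0 -> c' != 0 ->
    supp c' \subset supp c -> exists2 l : F, l != 0 & c' = l *: c.

(* Ashikhmin--Barg condition wmin/wmax > (q-1)/q, q = #|F| *)
Definition AB_condition k n (G : 'M[F]_(k, n)) : bool :=
  ((#|F| - 1) * wmax G < #|F| * wmin G)%N.

(* q-ary simplex generator matrix: columns are representatives of all
   one-dimensional subspaces of F^m (each exactly once) *)
Definition simplex_gen m N (G : 'M[F]_(m, N)) : Prop :=
  (forall j, col j G != 0) /\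
  (forall v : 'cV[F]_m, v != 0 -> exists! j, exists c : F, v = c *: col j G).

Definition ceil_div (a b : nat) : nat := ((a + b.-1) %/ b)%N.

Definition ext_len k n (D : 'M[F]_(k, n)) : nat :=
  (ceil_div (#|F| * wmin D) (#|F| - 1) - wmax D)%N.

(* Basis hypotheses of the extension construction: the rows r_1..r_K of R
   form a basis of the code D, wt(r_1) = wmax, wt(r_2) = wmin
   (r_1, r_2 are the rows of index 0 and 1). *)
Definition ext_basis k n (D R : 'M[F]_(k, n)) : Prop :=
  [/\ row_free R, (R == D)%MS,
      (forall i : 'I_k, nat_of_ord i = 0%N -> wt (row i R) = wmax D) &
      (forall i : 'I_k, nat_of_ord i = 1%N -> wt (row i R) = wmin D)].

(* Generator matrix of the extended code: rows (a, r_1), (0, r_2), ..., (0, r_K) *)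
Definition ext_mx k n n' (a : 'rV[F]_n') (R : 'M[F]_(k, n)) : 'M[F]_(k, n' + n) :=
  row_mx (\matrix_(i < k, j < n') if nat_of_ord i == 0%N then a 0 j else 0) R.

End Codes.

(* Main.v *)
Require Import Defs.
From mathcomp Require Import all_boot all_order all_algebra all_field.
From mathcomp Require Import ring zify.
Import GRing.Theory.
Set Implicit Arguments. Unset Strict Implicit.
Local Open Scope ring_scope.

Lemma bigmin_le (I : eqType) (r : seq I) (P : pred I) (F : I -> nat) x i :
  i \in r -> P i -> (\big[minn/x]_(j <- r | P j) F j <= F i)%N.
Proof.
elim: r => // j r IH; rewrite inE big_cons => /orP[/eqP <-|ir] Pi.
  by rewrite Pi geq_minl.
case: ifP => _; last exact: IH.
by rewrite geq_min IH ?orbT.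
Qed.

Lemma sum_constT (T : finType) n : (\sum_(i : T) n = #|T| * n)%N.
Proof. by rewrite -sum_nat_const. Qed.

Section H.
Variable F : finFieldType.
Local Notation q := #|F|.

Lemma fiber_card r s (f : 'M[F]_(r,s) -> F)
  (fD : forall u v, f (u + v) = f u + f v) (fZ : forall (c : F) u, f (c *: u) = c * f u)
  (w : 'M_(r,s)) (fw : f w = 1) (c : F) :
  (#|[set v | f v == c]| * q = q ^ (r * s))%N.
Proof.
have E : forall c, #|[set v | f v == c]| = #|[set v | f v == 0]|.
  move=> d; rewrite -(card_preimset _ (addIr (d *: w))).
  by apply: eq_card => v; rewrite !inE fD fZ fw mulr1 -subr_eq0 addrK.
have := card_mx F r s => <-.
rewrite -[#|'M_(r,s)|]sum1_card (partition_big (fun v => f v) predT) //=.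
rewrite (eq_bigr (fun _ => #|[set v | f v == c]|)); last first.
  move=> d _; rewrite (E c) -(E d) sum1dep_card; apply: eq_card => v; rewrite !inE //.
by rewrite (@sum_constT F) mulnC.
Qed.


Lemma scaleI_vec k l (v : 'M[F]_(k,l)) : v != 0 -> injective (fun c : F => c *: v).
Proof.
move=> nz c1 c2 /= /eqP; rewrite -subr_eq0 -scalerBl scaler_eq0 (negPf nz) orbF subr_eq0.
by move/eqP.
Qed.

Lemma row_nz n (x : 'rV[F]_n) : x != 0 -> exists k, x 0 k != 0.
Proof.
move=> nz; case: (pickP (fun k => x 0 k != 0)) => [k hk|h]; first by exists k.
move/eqP: nz; case; apply/rowP => k; rewrite !mxE; have := h k; by move/negbFE/eqP.
Qed.

Lemma mul_delta_entry n (x : 'rV[F]_n) k : (x *m delta_mx k (0 : 'I_1)) 0 0 = x 0 k.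
Proof. by rewrite -colE mxE. Qed.

Lemma mulG_entry n p (x : 'rV[F]_n) (A : 'M[F]_(n,p)) j : (x *m A) 0 j = (x *m col j A) 0 0.
Proof. by rewrite !mxE; apply: eq_bigr => k _; rewrite !mxE. Qed.

Lemma wt_sum n (c : 'rV[F]_n) : wt c = (\sum_(j < n) (c 0%R j != 0%R : nat))%N.
Proof.
rewrite /wt /supp -sum1dep_card big_mkcond /=; apply: eq_bigr => j _.
by case: (c 0 j != 0).
Qed.

Lemma scale_entry k l (a : F) (A : 'M[F]_(k,l)) i j : (a *: A) i j = a * A i j.
Proof. by rewrite mxE. Qed.

Lemma proportional n (x y : 'rV[F]_n) : x != 0 ->
  (forall v : 'cV[F]_n, (x *m v) 0 0 = 0 -> (y *m v) 0 0 = 0) -> exists l, y = l *: x.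
Proof.
move=> /row_nz[k xk] H; exists (y 0 k / x 0 k); apply/rowP => i; rewrite !mxE.
have := H (x 0 k *: delta_mx i 0 - x 0 i *: delta_mx k 0).
rewrite !mulmxBr -!scalemxAr -!colE !mxE mulrC subrr => /(_ erefl) /eqP.
rewrite subr_eq0 => /eqP e.
by rewrite -[y 0 i](mulKf xk) e; ring.
Qed.

Lemma card_fiber r s (f : 'M[F]_(r,s) -> F)
  (fD : forall u v, f (u + v) = f u + f v) (fZ : forall (c : F) u, f (c *: u) = c * f u)
  (w : 'M_(r,s)) (fw : f w = 1) (c : F) (hrs : (0 < r * s)%N) :
  #|[set v | f v == c]| = (q ^ (r * s).-1)%N.
Proof.
have q0 : (0 < q)%N by apply: ltnW; apply: card_finNzRing_gt1.
apply/eqP; rewrite -(eqn_pmul2r q0) (fiber_card fD fZ fw c) -expnSr prednK //.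
Qed.

Variables (m N : nat) (G : 'M[F]_(m, N)).
Hypothesis hG : simplex_gen G.

Lemma dc (Q : 'cV[F]_m -> bool) (hQ : forall c v, c != 0 -> Q (c *: v) = Q v) :
  #|[set v : 'cV[F]_m | (v != 0) && Q v]| = (\sum_(j < N) Q (col j G) * q.-1)%N.
Proof.
pose P v j := [exists c, v == c *: col j G].
have E1 : #|[set v : 'cV[F]_m | (v != 0) && Q v]| =
   (\sum_(v : 'cV[F]_m | (v != 0%R) && Q v) \sum_(j < N) (P v j : nat))%N.
  rewrite -sum1dep_card; apply: eq_bigr => v /andP[nz _].
  have [j0 [[c0 e0] u0]] := hG.2 v nz.
  have Pj0 : P v j0 by apply/existsP; exists c0; rewrite e0.
  rewrite (bigD1 j0) // Pj0 big1 ?addn0 //.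
  move=> j nj; apply/eqP; rewrite eqb0; apply/negP => /existsP[c /eqP ec].
  by move/eqP: nj; apply; symmetry; apply: u0; exists c.
rewrite E1 exchange_big /=; apply: eq_bigr => j _.
rewrite -big_mkcondr.
rewrite sum1dep_card.
case: (boolP (Q (col j G))) => Qj /=.
  rewrite mul1n -(cardsC1 (0 : F)) -(card_imset _ (scaleI_vec (hG.1 j))); apply: eq_card => v.
  rewrite inE; apply/idP/imsetP.
    case/andP => /andP[nz _] /existsP[c /eqP ev]; exists c => //.
    by rewrite !inE; apply: contra nz => /eqP c0; rewrite ev c0 scale0r.
  case=> c; rewrite !inE => cnz ->.
  rewrite scaler_eq0 (negPf cnz) (negPf (hG.1 j)) /= hQ // Qj /=.
  by apply/existsP; exists c.
rewrite mul0n; apply/eqP; rewrite cards_eq0; apply/eqP/setP => v; rewrite !inE.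
apply/negP => /andP[/andP[nz Qv] /existsP[c /eqP e]].
have cnz : c != 0 by apply: contra nz => /eqP c0; rewrite e c0 scale0r.
by rewrite e hQ // (negPf Qj) in Qv.
Qed.


Lemma q_gt1 : (1 < q)%N. Proof. exact: card_finNzRing_gt1. Qed.

Lemma N_card (hm : (0 < m)%N) : (N * q.-1 = q ^ m - 1)%N.
Proof.
have := dc (Q := fun _ => true) (fun _ _ _ => erefl).
rewrite (eq_bigr (fun _ => q.-1)) ?sum_constT ?card_ord => [<-|j _]; last by rewrite mul1n.
rewrite (eq_card (B := [set~ (0 : 'cV[F]_m)])); last by move=> v; rewrite !inE andbT.
by rewrite cardsC1 card_mx muln1 subn1.
Qed.

Lemma wtG (hm : (0 < m)%N) (x : 'rV[F]_m) : x != 0 -> wt (x *m G) = (q ^ m.-1)%N.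
Proof.
move=> nz.
pose Q (v : 'cV[F]_m) := (x *m v) 0 0 != 0.
have hQ : forall c v, c != 0 -> Q (c *: v) = Q v.
  by move=> c v cnz; rewrite /Q -scalemxAr mxE mulf_eq0 (negPf cnz).
have := dc hQ.
have -> : (\sum_(j < N) Q (col j G) * q.-1 = wt (x *m G) * q.-1)%N.
  by rewrite wt_sum big_distrl /=; apply: eq_bigr => j _; rewrite /Q [in RHS]mulG_entry.
move=> E.
have [k xk] := row_nz nz.
pose f (v : 'cV[F]_m) := (x *m v) 0 0.
have fD : forall u v, f (u + v) = f u + f v by move=> u v; rewrite /f mulmxDr mxE.
have fZ : forall (c : F) u, f (c *: u) = c * f u by move=> c u; rewrite /f -scalemxAr mxE.
have fw : f ((x 0 k)^-1 *: delta_mx k 0) = 1 by rewrite fZ /f mul_delta_entry mulVf.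
have := card_fiber fD fZ fw 0; rewrite muln1 => /(_ hm) F0.
have E2 : #|[set v : 'cV[F]_m | (v != 0) && Q v]| = (q ^ m - q ^ m.-1)%N.
  have -> : [set v : 'cV[F]_m | (v != 0) && Q v] = ~: [set v | f v == 0].
    apply/setP => v; rewrite !inE /Q -/(f v) andb_idl //.
    by apply: contra => /eqP ->; rewrite /f mulmx0 mxE.
  by rewrite cardsCs setCK F0 card_mx muln1.
move: E; rewrite E2.
have q1 := q_gt1.
have -> : (q ^ m = q ^ m.-1 * q)%N by rewrite -expnSr prednK.
rewrite -[X in (_ - X)%N]muln1 -mulnBr subn1 => /eqP.
have qp : (0 < q.-1)%N by rewrite -ltnS prednK // ltnW.
by rewrite eqn_pmul2r // eq_sym => /eqP.
Qed.

Lemma simplex_prop (x y : 'rV[F]_m) : x *m G != 0 ->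
  supp (y *m G) \subset supp (x *m G) -> exists l, y *m G = l *: (x *m G).
Proof.
move=> nz sub.
have xnz : x != 0 by apply: contra nz => /eqP ->; rewrite mul0mx.
have [l ->] : exists l, y = l *: x.
  apply: proportional xnz _ => v xv.
  have [->|vnz] := eqVneq v 0; first by rewrite mulmx0 mxE.
  have [j [[c ev] _]] := hG.2 v vnz.
  have cnz : c != 0 by apply: contra vnz => /eqP c0; rewrite ev c0 scale0r.
  move: xv; rewrite ev -!scalemxAr !scale_entry => /eqP; rewrite mulf_eq0 (negPf cnz) /= => /eqP xj.
  have nj : j \notin supp (x *m G) by rewrite inE negbK mulG_entry xj.
  have : j \notin supp (y *m G) by apply: contra nj; apply: (subsetP sub).
  by rewrite inE negbK mulG_entry => /eqP ->; rewrite mulr0.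
by exists l; rewrite scalemxAl.
Qed.

Lemma wt0 n : wt (0 : 'rV[F]_n) = 0%N.
Proof. by rewrite wt_sum big1 // => j _; rewrite mxE eqxx. Qed.

Lemma wt_row_mx n1 n2 (u : 'rV[F]_n1) (v : 'rV[F]_n2) : wt (row_mx u v) = (wt u + wt v)%N.
Proof.
rewrite !wt_sum big_split_ord /=; congr addn; apply: eq_bigr => j _.
  by rewrite row_mxEl. by rewrite row_mxEr.
Qed.

Lemma wt_scale_full n (c : F) (a : 'rV[F]_n) : (forall j, a 0 j != 0) ->
  wt (c *: a) = if c == 0 then 0%N else n.
Proof.
move=> ha; case: eqP => [->|/eqP cnz]; first by rewrite scale0r wt0.
rewrite wt_sum (eq_bigr (fun _ => 1%N)) ?sum_constT ?card_ord ?muln1 // => j _.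
by rewrite mxE mulf_eq0 (negPf cnz) (negPf (ha j)).
Qed.

Lemma cw_G (hm : (0 < m)%N) c : c \in codewords G -> c != 0 -> wt c = (q ^ m.-1)%N.
Proof.
rewrite inE => /submxP[x ->] nz; apply: wtG => //.
by apply: contra nz => /eqP ->; rewrite mul0mx.
Qed.

End H.

Unset Implicit Arguments.

Theorem proposition6p1 (F : finFieldType) (m N : nat) (hm : (2 <= m)%N)
  (G : 'M[F]_(m, N)) (hG : simplex_gen G)
  (R : 'M[F]_(m, N)) (hR : ext_basis G R)
  (a : 'rV[F]_(ext_len G)) (ha : forall j, a 0 j != 0) :
  let q := #|F| in
  let n' := ceil_div (q ^ m.-1) (q - 1) in
  let C' := ext_mx a R in
  [/\ ext_len G = n',
      (ext_len G + N = (q ^ m - 1) %/ (q - 1) + n')%N,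
      \rank C' = m,
      wmin C' = (q ^ m.-1)%N &
      minimal_code C'] /\
  ~~ AB_condition C' /\
  (forall w : nat,
        wdist C' w =
          (if w == 0%N then 1
           else if w == q ^ m.-1 then q ^ m.-1 - 1
           else if w == q ^ m.-1 + n' then (q - 1) * q ^ m.-1
           else 0)%N).
Proof.
move=> q n' C'; rewrite /n' /q /C'; clear q n' C'.
case: hR => rfR eqRG _ _.
have m0 : (0 < m)%N by apply: leq_trans hm.
have q1 : (1 < #|F|)%N := q_gt1 F.
set w1 := (#|F| ^ m.-1)%N.
have w1p : (0 < w1)%N by rewrite expn_gt0 ltnW.
have RG : (R <= G)%MS by case/andP: eqRG.
have [D eD] : exists D, R = D *m G by apply/submxP.
pose i0 : 'I_m := Ordinal m0.
pose i1 : 'I_m := Ordinal hm.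
have xR0 : forall x : 'rV_m, x != 0 -> x *m R != 0.
  move=> x nz; apply/eqP => h; move/eqP: nz; apply; apply: (row_free_inj rfR); by rewrite /= h mul0mx.
have wR : forall x : 'rV_m, wt (x *m R) = if x == 0 then 0%N else w1.
  move=> x; case: eqP => [->|/eqP nz]; first by rewrite mul0mx wt0.
  apply: (cw_G hG m0 _ (xR0 _ nz)); by rewrite inE eD mulmxA submxMl.
pose e0 : 'rV[F]_m := delta_mx 0 i0.
have e0nz : e0 != 0.
  by apply/eqP => /matrixP /(_ 0 i0); rewrite !mxE !eqxx /= => /eqP; rewrite oner_eq0.
have c0G : e0 *m R \in codewords G by rewrite inE eD mulmxA submxMl.
have wmaxG : wmax G = w1.
  apply/eqP; rewrite eqn_leq; apply/andP; split.
    apply/bigmax_leqP => c cG; have [->|nz] := eqVneq c 0; first by rewrite wt0.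
    by rewrite (cw_G hG m0 cG nz).
  have := cw_G hG m0 c0G (xR0 _ e0nz); rewrite -/w1 => <-; exact: leq_bigmax_cond.
have wminG : wmin G = w1.
  rewrite /wmin; apply: (big_ind (fun y => y = w1)) => //.
    by move=> u v -> ->; rewrite minnn.
  move=> c /andP[cG nz]; exact: (cw_G hG m0 cG nz).
have q10 : (0 < #|F| - 1)%N by rewrite subn_gt0.
set n' := ceil_div w1 (#|F| - 1).
have En : ext_len G = n'.
  rewrite /ext_len wmaxG wminG /n' /ceil_div.
  have -> : (#|F| * w1 + (#|F| - 1).-1 = w1 * (#|F| - 1) + (w1 + (#|F| - 1).-1))%N.
    nia.
  by rewrite divnMDl // addKn.
have EN : ((#|F| ^ m - 1) %/ (#|F| - 1))%N = N.
  by rewrite -(N_card hG m0) subn1 mulnK // -subn1.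
have n'p : (0 < n')%N by rewrite /n' /ceil_div divn_gt0 //; lia.
have key : forall x : 'rV_m, x *m ext_mx a R = row_mx (x 0 i0 *: a) (x *m R).
  move=> x; rewrite /ext_mx mul_mx_row; congr row_mx.
  apply/rowP => j; rewrite !mxE (bigD1 i0) //= !mxE /= big1 ?addr0 // => i ni.
  rewrite !mxE; have -> : (nat_of_ord i == 0%N) = false; last by rewrite mulr0.
  by apply/negbTE; apply: contra ni => /eqP h; apply/eqP/val_inj.
have wC : forall x : 'rV_m, wt (x *m ext_mx a R) =
    if x == 0 then 0%N else if x 0 i0 == 0 then w1 else (w1 + n')%N.
  move=> x; rewrite key wt_row_mx wt_scale_full // wR -En.
  have [->|xnz] := eqVneq x 0; first by rewrite mxE !eqxx.
  by case: eqP => _; [rewrite add0n | rewrite addnC].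
have injC : injective (fun x : 'rV_m => x *m ext_mx a R).
  move=> x y /=; rewrite !key => /eq_row_mx[_ h]; exact: (row_free_inj rfR h).
have rkC : \rank (ext_mx a R) = m.
  apply/eqP; rewrite eqn_leq rank_leq_row /=.
  have eR : ext_mx a R *m col_mx 0 1%:M = R.
    by rewrite /ext_mx mul_row_col mulmx0 mulmx1 add0r.
  by have := mxrankM_maxl (ext_mx a R) (col_mx 0 1%:M); rewrite eR (eqP rfR).
have e0i0 : e0 0 i0 = 1 by rewrite mxE !eqxx.
have wmaxC : wmax (ext_mx a R) = (w1 + n')%N.
  apply/eqP; rewrite eqn_leq; apply/andP; split.
    apply/bigmax_leqP => c; rewrite inE => /submxP[x ->]; rewrite wC.
    by case: ifP => _ //; case: ifP => _ //; rewrite leq_addr.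
  have <- : wt (e0 *m ext_mx a R) = (w1 + n')%N by rewrite wC (negPf e0nz) e0i0 oner_eq0.
  by apply: leq_bigmax_cond; rewrite inE submxMl.
pose e1 : 'rV[F]_m := delta_mx 0 i1.
have e1nz : e1 != 0.
  by apply/eqP => /matrixP /(_ 0 i1); rewrite !mxE !eqxx /= => /eqP; rewrite oner_eq0.
have e1i0 : e1 0 i0 = 0 by rewrite mxE eqxx /=.
have wminC : wmin (ext_mx a R) = w1.
  apply/eqP; rewrite eqn_leq; apply/andP; split.
    have e1C : e1 *m ext_mx a R != 0.
      apply: contra e1nz => /eqP h; apply/eqP; apply: injC; by rewrite /= h mul0mx.
    apply: leq_trans (bigmin_le _ _ (mem_index_enum (e1 *m ext_mx a R)) _) _.
      by rewrite inE submxMl e1C.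
    by rewrite wC (negPf e1nz) e1i0 eqxx.
  rewrite /wmin; apply: (big_ind (fun y => w1 <= y)%N).
  - by rewrite wmaxC leq_addr.
  - by move=> u v hu hv; rewrite leq_min hu hv.
  move=> c /andP[]; rewrite inE => /submxP[x ->] nz; rewrite wC.
  case: ifP => [/eqP x0|_]; first by rewrite x0 mul0mx eqxx in nz.
  by case: ifP => _ //; rewrite leq_addr.
have minC : minimal_code (ext_mx a R).
  move=> c c'; rewrite !inE => /submxP[x ->] /submxP[x' ->] nz nz' sub.
  have xnz : x != 0 by apply: contra nz => /eqP ->; rewrite mul0mx.
  have sub2 : supp (x' *m R) \subset supp (x *m R).
    apply/subsetP => j; rewrite !inE => hj.
    have : rshift (ext_len G) j \in supp (x' *m ext_mx a R) by rewrite inE key row_mxEr.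
    by move/(subsetP sub); rewrite inE key row_mxEr.
  have [l hl] : exists l, x' *m R = l *: (x *m R).
    move: sub2; rewrite eD !mulmxA => sub2; apply: (simplex_prop hG _ sub2).
    by rewrite -mulmxA -eD xR0.
  have ex : x' = l *: x by apply: (row_free_inj rfR); rewrite /= hl scalemxAl.
  exists l; last by rewrite ex scalemxAl.
  by apply: contra nz' => /eqP l0; rewrite ex l0 scale0r mul0mx.
split; first by split => //; rewrite En EN addnC.
split.
  rewrite /AB_condition wmaxC wminC -leqNgt.
  have h : (w1 <= (#|F| - 1) * n')%N by rewrite /n' /ceil_div; lia.
  rewrite mulnDr; have -> : (#|F| * w1 = (#|F| - 1) * w1 + w1)%N by nia.
  by rewrite leq_add2l.
move=> w; rewrite /wdist.
have -> : [set c in codewords (ext_mx a R) | wt c == w] =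
    (fun x => x *m ext_mx a R) @: [set x : 'rV_m | wt (x *m ext_mx a R) == w].
  apply/setP => c; rewrite /codewords !inE; apply/andP/imsetP.
    by case=> /submxP[x ->] h; exists x => //; rewrite inE.
  by case=> x; rewrite inE => h ->; split => //; exact: submxMl.
rewrite (card_imset _ injC).
pose A := [set x : 'rV[F]_m | x 0 i0 == 0].
have cA : #|A| = w1.
  have := card_fiber (f := fun x : 'rV[F]_m => x 0 i0) _ _ (w := delta_mx 0 i0) _ 0.
  rewrite mul1n; apply.
  - by move=> u v; rewrite mxE.
  - by move=> c u; rewrite mxE.
  - by rewrite mxE !eqxx.
  - exact: m0.
have w1n : (w1 == w1 + n')%N = false.
  by apply/negbTE; rewrite -{1}[w1]addn0 eqn_add2l eq_sym -lt0n.
have w10 : (0 == w1)%N = false by apply/negbTE; rewrite eq_sym -lt0n.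
have w1n0 : (0 == w1 + n')%N = false by apply/negbTE; rewrite eq_sym -lt0n addn_gt0 w1p.
case: eqP => [->|/eqP w0].
  have -> : [set x | wt (x *m ext_mx a R) == 0%N] = [set 0 : 'rV[F]_m]; last by rewrite cards1.
  apply/setP => x; rewrite !inE wC.
  have [x0|xnz] := eqVneq x 0; first by subst x; rewrite eqxx.
  by case: ifP => _; rewrite eq_sym ?w10 ?w1n0.
case: eqP => [->|/eqP ww1].
  have -> : [set x | wt (x *m ext_mx a R) == w1] = A :\ 0.
    apply/setP => x; rewrite !inE wC.
    have [x0|xnz] := eqVneq x 0; first by subst x; rewrite /= eq_sym eqn0Ngt w1p.
    by case: ifP => _; rewrite ?eqxx // eq_sym w1n.
  by rewrite -cA (cardsD1 0 A) {1}inE mxE eqxx add1n subn1.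
case: eqP => [->|/eqP wn].
  have -> : [set x | wt (x *m ext_mx a R) == w1 + n'] = ~: A.
    apply/setP => x; rewrite !inE wC.
    have [x0|xnz] := eqVneq x 0; first by subst x; rewrite mxE eqxx w1n0.
    by case: ifP => _; rewrite ?eqxx // w1n.
  rewrite cardsCs setCK cA card_mx mul1n.
  have -> : (#|F| ^ m = #|F| * w1)%N by rewrite /w1 -expnS prednK.
  by rewrite mulnBl mul1n.
apply/eqP; rewrite cards_eq0; apply/eqP/setP => x; rewrite !inE wC.
case: ifP => _; first by rewrite eq_sym (negPf w0).
by case: ifP => _; rewrite eq_sym ?(negPf ww1) ?(negPf wn).
Qed.
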